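(* Let $M$ be a system execution satisfying the Lazy Set axioms A0, A1, A2, let $\Rightarrow$ be the relation defined in the context, and suppose $X\Rightarrow Y\Rightarrow Z$. Then: (1) if $\mathrm{Add}(X)$, then $X<Z$, $\mathrm{Cnt}^1(Y)$ and $\mathrm{Rem}^1(Z)$; (2) if $\mathrm{Rem}(X)$, then $X<Z$; (3) if $\mathrm{Cnt}(X)$, then $\mathrm{Begin}(X)<\mathrm{End}(Z)$.
   Context: A system execution $M$ consists of: a set of events, partitioned into low-level events (actions) and high-level events; unary predicates $\mathrm{Add},\mathrm{Rem},\mathrm{Cnt}$ on events; a partial order $<$ on events in which every event has finitely many predecessors (and Lamport's finiteness property: for every event $x$ there is a finite set $E$ with $x<y$ for all events $y\notin E$); functions $\mathrm{Begin},\mathrm{End}$ from events to actions with $\mathrm{Begin}(e)=\mathrm{End}(e)=e$ for actions $e$; functions $\chi$ (events $\to\{0,1,f\}$), $\mathrm{val}$ (events $\to\mathbb N$), $\gamma$ (events $\to$ events). For events $X,Y$, $X<Y$ iff $\mathrm{End}(X)<\mathrm{Begin}(Y)$. Notation: $\mathrm{Add}^p(a)$ abbreviates $\mathrm{Add}(a)\wedge\chi(a)=p$, similarly $\mathrm{Rem}^p,\mathrm{Cnt}^p$; $\mathrm{Op}^p(a)$ abbreviates $(\mathrm{Add}(a)\vee\mathrm{Rem}(a)\vee\mathrm{Cnt}(a))\wedge\chi(a)=p$ for $p\in\{0,1\}$. A0: $\mathrm{Add},\mathrm{Rem},\mathrm{Cnt}$ pairwise disjoint; $\mathrm{Add},\mathrm{Rem}$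 events are actions, $\mathrm{Cnt}$ events are high-level; $\mathrm{Begin}(X),\mathrm{End}(X)$ are actions; for $\mathrm{Cnt}$ events $E$, $\mathrm{Begin}(E)<\mathrm{End}(E)$; $<$ restricted to actions is linear. A1: for every $A$ with $\mathrm{Op}^1(A)$: $\mathrm{Add}^0(\gamma(A))$, $\mathrm{val}(\gamma(A))=\mathrm{val}(A)$, $\gamma(A)<\mathrm{End}(A)$, and no $R$ has $\mathrm{Rem}^1(R)$, $\gamma(R)=\gamma(A)$, $\gamma(A)<R<A$. A2: if $\mathrm{Op}^0(B)$, $\mathrm{Add}^0(A)$, $A<B$, $\mathrm{val}(A)=\mathrm{val}(B)$, then some $R$ has $\mathrm{Rem}^1(R)$, $A=\gamma(R)$, $R<\mathrm{End}(B)$. The relation $\Rightarrow$ on events holds exactly in the following cases: (1) for every $\mathrm{Cnt}^1$ event $C$: $\gamma(C)\Rightarrow C$, and $C\Rightarrow R$ for every $R$ with $\mathrm{Rem}^1(R)$ and $\gamma(R)=\gamma(C)$; (2) $R\Rightarrow C$ whenever $\mathrm{Cnt}^0(C)$, $\mathrm{Rem}^1(R)$, $\mathrm{val}(R)=\mathrm{val}(C)$, not $C<R$, and $\gamma(R)<C$; (3) $C\Rightarrow A$ whenever $\mathrm{Cnt}^0(C)$, $\mathrm{Add}^0(A)$, $\mathrm{val}(C)=\mathrm{val}(A)$ and not $A<C$. *)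

(* Defs.v *)
From Stdlib Require Import List.
Set Implicit Arguments.

Inductive chival : Type := c0 | c1 | cf.

Record sysexec : Type := SysExec {
  ev : Type;
  action : ev -> Prop;             (* low-level events; the others are high-level *)
  Add : ev -> Prop;
  Rem : ev -> Prop;
  Cnt : ev -> Prop;
  lt : ev -> ev -> Prop;
  Begin : ev -> ev;
  End : ev -> ev;
  chi : ev -> chival;
  val : ev -> nat;
  gamma : ev -> ev
}.

Section Defs.
Variable M : sysexec.

Local Notation "x < y" := (lt M x y).

Definition is_sysexec : Prop :=
  (forall x, ~ x < x) /\
  (forall x y z, x < y -> y < z -> x < z) /\
  (forall x, exists l : list (ev M), forall y, y < x -> In y l) /\
  (* Lamport's finiteness property *)
  (forall x, exists l : list (ev M), forall y, ~ In y l -> x < y) /\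
  (forall e, action M e -> Begin M e = e /\ End M e = e) /\
  (forall X Y, X < Y <-> End M X < Begin M Y).

Definition Add_p (p : chival) (a : ev M) := Add M a /\ chi M a = p.
Definition Rem_p (p : chival) (a : ev M) := Rem M a /\ chi M a = p.
Definition Cnt_p (p : chival) (a : ev M) := Cnt M a /\ chi M a = p.
Definition Op_p (p : chival) (a : ev M) :=
  (Add M a \/ Rem M a \/ Cnt M a) /\ chi M a = p.

Definition A0 : Prop :=
  (forall e, ~ (Add M e /\ Rem M e)) /\
  (forall e, ~ (Add M e /\ Cnt M e)) /\
  (forall e, ~ (Rem M e /\ Cnt M e)) /\
  (forall e, Add M e -> action M e) /\
  (forall e, Rem M e -> action M e) /\
  (forall e, Cnt M e -> ~ action M e) /\
  (forall X, action M (Begin M X) /\ action M (End M X)) /\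
  (forall E, Cnt M E -> Begin M E < End M E) /\
  (forall a b, action M a -> action M b -> a = b \/ a < b \/ b < a).

Definition A1 : Prop :=
  forall A, Op_p c1 A ->
    Add_p c0 (gamma M A) /\
    val M (gamma M A) = val M A /\
    gamma M A < End M A /\
    ~ (exists R, Rem_p c1 R /\ gamma M R = gamma M A /\
                 gamma M A < R /\ R < A).

Definition A2 : Prop :=
  forall A B, Op_p c0 B -> Add_p c0 A -> A < B -> val M A = val M B ->
    exists R, Rem_p c1 R /\ A = gamma M R /\ R < End M B.

Definition arrow (X Y : ev M) : Prop :=
  (Cnt_p c1 Y /\ X = gamma M Y) \/
  (Cnt_p c1 X /\ Rem_p c1 Y /\ gamma M Y = gamma M X) \/
  (Cnt_p c0 Y /\ Rem_p c1 X /\ val M X = val M Y /\ ~ Y < X /\ gamma M X < Y) \/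
  (Cnt_p c0 X /\ Add_p c0 Y /\ val M X = val M Y /\ ~ Y < X).

End Defs.

(* Main.v *)
Require Import Defs.

Theorem lemma3p7 (M : sysexec) (HM : is_sysexec M)
  (H0 : A0 M) (H1 : A1 M) (H2 : A2 M) (X Y Z : ev M) :
  arrow M X Y -> arrow M Y Z ->
  (Add M X -> lt M X Z /\ Cnt_p M c1 Y /\ Rem_p M c1 Z) /\
  (Rem M X -> lt M X Z) /\
  (Cnt M X -> lt M (Begin M X) (End M Z)).
Proof.
  destruct HM as [Hirr [Htr [_ [_ [Hact Hlt]]]]].
  destruct H0 as [dAR [dAC [dRC [aA [aR [cNA [BE [cBE lin]]]]]]]].
  assert (EA : forall e, action M e -> End M e = e) by (intros e he; apply (Hact e he)).
  assert (BA : forall e, action M e -> Begin M e = e) by (intros e he; apply (Hact e he)).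
  intros HXY HYZ.
  destruct HXY as [[[cY chY] eX]|[[[cX chX] [[rY chY] gY]]|[[[cY chY] [[rX chX] [vXY [nYX gXY]]]]|[[cX chX] [[aY chY] [vXY nYX]]]]]];
  destruct HYZ as [[[cZ chZ] eY]|[[[cY' chY'] [[rZ chZ] gZ]]|[[[cZ chZ] [[rY' chY'] [vYZ [nZY gYZ]]]]|[[cY' chY'] [[aZ chZ] [vYZ nZY]]]]]];
  try congruence;
  try subst X; try subst Y;
  repeat match goal with
  | [ h : Cnt M ?W, h' : chi M ?W = c1 |- _ ] =>
      lazymatch goal with
      | [ _ : Add_p M c0 (gamma M W) |- _ ] => fail
      | _ => let HH := fresh "HA" in
        assert (HH := proj1 (H1 W (conj (or_intror (or_intror h)) h')))
      end
  end;
  repeat match goal with [ h : Add_p M _ _ |- _ ] => let a := fresh "ad" in let b := fresh "ch" in destruct h as [a b] end;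
  try (exfalso; match goal with
    | [ h : Add M ?e, h' : Cnt M ?e |- _ ] => exact (dAC e (conj h h'))
    | [ h : Rem M ?e, h' : Cnt M ?e |- _ ] => exact (dRC e (conj h h'))
    | [ h : Add M ?e, h' : Rem M ?e |- _ ] => exact (dAR e (conj h h'))
    end).
  - split; [|split]; intros h.
    + split; [|split; split; assumption].
      destruct (H1 Z (conj (or_intror (or_introl rZ)) chZ)) as [_ [_ [hz _]]].
      rewrite (EA Z (aR Z rZ)), gZ in hz. exact hz.
    + exfalso; exact (dAR _ (conj ad h)).
    + exfalso; exact (dAC _ (conj ad h)).
  - split;[|split]; intros h.
    + exfalso; exact (dAC _ (conj h cX)).
    + exfalso; exact (dRC _ (conj h cX)).
    + destruct (H1 X (conj (or_intror (or_intror cX)) chX)) as [_ [vg [_ noR]]].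
      destruct (H1 Y (conj (or_intror (or_introl rY)) chY)) as [_ [vgY _]].
      assert (gZ' : lt M (gamma M X) Z) by (rewrite <- gY; exact gYZ).
      assert (vv : val M (gamma M X) = val M Z) by (rewrite <- gY, vgY; exact vYZ).
      destruct (H2 (gamma M X) Z (conj (or_intror (or_intror cZ)) chZ) (conj ad ch) gZ' vv)
        as [R [[rR chR] [eR lR]]].
      destruct (lin (Begin M X) (End M Z) (proj1 (BE X)) (proj2 (BE Z))) as [e|[l|l]];
        [exfalso| exact l | exfalso];
      (apply noR; exists R; split; [split; assumption|]; split; [symmetry; exact eR|]; split;
       [ destruct (H1 R (conj (or_intror (or_introl rR)) chR)) as [_ [_ [hr _]]];
         rewrite (EA R (aR R rR)) in hr; rewrite eR; exact hr
       | apply Hlt; rewrite (EA R (aR R rR)) ]).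
      * rewrite e; exact lR.
      * exact (Htr _ _ _ lR l).
  - split;[|split]; intros h.
    + exfalso; exact (dAR _ (conj h rX)).
    + destruct (H1 X (conj (or_intror (or_introl rX)) chX)) as [[ag cg] [vg [_ noR]]].
      assert (gZ : lt M (gamma M X) Z).
      { apply Hlt in gXY. rewrite (EA _ (aA _ ag)) in gXY.
        destruct (lin (Begin M Y) Z (proj1 (BE Y)) (aA Z aZ)) as [e|[l|l]].
        - rewrite <- e; exact gXY.
        - exact (Htr _ _ _ gXY l).
        - exfalso; apply nZY; apply Hlt; rewrite (EA _ (aA _ aZ)); exact l. }
      destruct (lin X Z (aR X rX) (aA Z aZ)) as [e|[l|l]];
        [exfalso; subst; exact (dAR _ (conj aZ rX)) | exact l | exfalso].
      destruct (H2 (gamma M X) Z (conj (or_introl aZ) chZ) (conj ag cg) gZ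
        (eq_trans vg (eq_trans vXY vYZ))) as [R [[rR chR] [eR lR]]].
      rewrite (EA _ (aA _ aZ)) in lR.
      apply noR. exists R. split;[split;assumption|]. split;[symmetry;exact eR|]. split.
      * destruct (H1 R (conj (or_intror (or_introl rR)) chR)) as [_ [_ [hr _]]].
        rewrite (EA R (aR R rR)) in hr; rewrite eR; exact hr.
      * exact (Htr _ _ _ lR l).
    + exfalso; exact (dRC _ (conj rX h)).
  - split;[|split]; intros h.
    + exfalso; exact (dAC _ (conj h cX)).
    + exfalso; exact (dRC _ (conj h cX)).
    + destruct (H1 Z (conj (or_intror (or_intror cZ)) chZ)) as [_ [_ [hz _]]].
      destruct (lin (Begin M X) (gamma M Z) (proj1 (BE X)) (aA _ aY)) as [e|[l|l]].
      * rewrite e; exact hz.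
      * exact (Htr _ _ _ l hz).
      * exfalso; apply nYX; apply Hlt; rewrite (EA _ (aA _ aY)); exact l.
Qed.
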